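(* Let $n$ be a positive integer with $n \equiv 1 \pmod{3}$. Then every $n \times n$ Latin square $L$ satisfies $$I(L) \ge \frac{4n(n-1)}{9},$$ where $$I(L) = \frac{1}{3} \sum_{0 \le r_1 < r_2 \le n-1} \left\lvert 3\, d(r_1,r_2) - n(n+1) \right\rvert$$ and $d(r_1,r_2) = \sum_{s=0}^{n-1} \lvert \mathrm{pos}(r_1,s) - \mathrm{pos}(r_2,s) \rvert$.
   Context: An $n \times n$ Latin square is an $n\times n$ array with entries in $\{0,\dots,n-1\}$ in which each symbol occurs exactly once in each row and exactly once in each column. Rows and columns are indexed by $\{0,\dots,n-1\}$. For a row $r$ and a symbol $s$, $\mathrm{pos}(r,s) \in \{0,\dots,n-1\}$ denotes the column in which symbol $s$ appears in row $r$. All absolute values are of ordinary integers; $I(L)$ is a rational number (the imbalance of $L$). *)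

(* Defs.v *)
From mathcomp Require Import all_boot all_order all_algebra.
Set Implicit Arguments. Unset Strict Implicit. Unset Printing Implicit Defensive.
Import Order.TTheory GRing.Theory Num.Theory.

(* An n x n array with entries in {0..n-1}: L r c is the symbol in row r, column c. *)
Definition latin_square (n : nat) (L : 'I_n -> 'I_n -> 'I_n) : Prop :=
  (forall r, injective (L r)) /\ (forall c, injective (fun r => L r c)).

(* pos L r s : the column in which symbol s appears in row r
   (default s if no such column, which cannot happen for a Latin square). *)
Definition pos (n : nat) (L : 'I_n -> 'I_n -> 'I_n) (r s : 'I_n) : 'I_n :=
  odflt s [pick c | L r c == s].

Definition dist_rows (n : nat) (L : 'I_n -> 'I_n -> 'I_n) (r1 r2 : 'I_n) : int :=
  \sum_(s < n) `| (pos L r1 s)%:Z - (pos L r2 s)%:Z |.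

Definition imbalance (n : nat) (L : 'I_n -> 'I_n -> 'I_n) : rat :=
  (1 / 3%:R) * \sum_(r1 < n) \sum_(r2 < n | (r1 < r2)%N)
     (`| 3%:Z * dist_rows L r1 r2 - (n * (n + 1))%:Z |)%:~R.

(* Main.v *)
Require Import Defs.
From mathcomp Require Import all_boot all_order all_algebra zify ring lra.
Import Order.TTheory GRing.Theory Num.Theory.
Local Open Scope ring_scope.

Lemma key_ineq (x k : int) : x = 6 * k + 4 -> 8 + x <= 3 * `|x|.
Proof. move=> ->; lia. Qed.

Lemma abs_min (a b : nat) : `|a%:Z - b%:Z| = a%:Z + b%:Z - 2 * (minn a b)%:Z.
Proof. case: (leqP a b) => h; lia. Qed.

Lemma posK n (L : 'I_n -> 'I_n -> 'I_n) r s : latin_square L -> L r (pos L r s) = s.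
Proof.
case=> Hr _; rewrite /pos; case: pickP => [c /eqP //|H].
have := injF_onto (Hr r) s; case/codomP=> c Hc; by move: (H c); rewrite -Hc eqxx.
Qed.

Arguments posK {n L} r s.
Lemma pos_inj n (L : 'I_n -> 'I_n -> 'I_n) r : latin_square L -> injective (pos L r).
Proof. move=> HL s1 s2 e; by rewrite -(posK r s1 HL) e posK. Qed.

Lemma pos_inj_col n (L : 'I_n -> 'I_n -> 'I_n) s : latin_square L -> injective (fun r => pos L r s).
Proof.
move=> HL r1 r2 /= e; have [_ Hc] := HL; apply: (Hc (pos L r1 s)) => /=.
by rewrite {2}e !posK.
Qed.

Lemma tri (n : nat) : 2 * \sum_(0 <= a < n) (n%:Z - a%:Z) = n%:Z * (n%:Z + 1).
Proof.
elim: n => [|n IH]; first by rewrite big_geq.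
rewrite big_nat_recr //=.
have -> : \sum_(0 <= i < n) ((n.+1)%:Z - i%:Z) = \sum_(0 <= i < n) (n%:Z - i%:Z) + n%:Z.
  rewrite (eq_bigr (fun i => (n%:Z - i%:Z) + 1)); last by move=> i _; lia.
  by rewrite big_split /= sumr_const_nat subn0 natz.
move: IH; set S := \sum_(_ <= _ < _) _ => IH; lia.
Qed.

Lemma Gnat (n : nat) : 3 * \sum_(0 <= a < n) \sum_(0 <= b < n) `|a%:Z - b%:Z| = n%:Z ^+ 3 - n%:Z.
Proof.
elim: n => [|n IH]; first by rewrite big_geq.
rewrite big_nat_recr //= big_nat_recr //=.
rewrite (@eq_big_nat _ _ _ 0 n _ (fun a => \sum_(0 <= b < n) `|a%:Z - b%:Z| + (n%:Z - a%:Z))); last first.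
  move=> a /andP[_ ha]; rewrite big_nat_recr //=; congr (_ + _); rewrite ltr0_norm ?opprB // subr_lt0 ltz_nat //.
rewrite (@eq_big_nat _ _ _ 0 n (fun b => `|n%:Z - b%:Z|) (fun b => (n%:Z - b%:Z))); last first.
  move=> a /andP[_ ha]; rewrite gtr0_norm // subr_gt0 ltz_nat //.
rewrite big_split /=.
have T := tri n.
move: IH T; set A := \sum_(_ <= _ < _) _; set B := \sum_(_ <= _ < _) _ => IH T.
have -> : `|n%:Z - n%:Z| = 0 by lia.
rewrite addr0 exprS expr2 exprS expr2 in IH *.
have -> : 3 * (A + B + B) = 3 * A + 3 * (2 * B) by ring.
rewrite IH T -(addn1 n) PoszD; ring.
Qed.

Lemma Gord (n : nat) : 3 * \sum_(a < n) \sum_(b < n) `|(a:nat)%:Z - (b:nat)%:Z| = n%:Z ^+ 3 - n%:Z.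
Proof.
rewrite -Gnat big_mkord; congr (_ * _); apply: eq_bigr => a _.
by rewrite big_mkord.
Qed.

Section S.
Variables (n : nat) (L : 'I_n -> 'I_n -> 'I_n) (HL : latin_square L).

Lemma sum_pos r : \sum_(s < n) (pos L r s : nat)%:Z = \sum_(c < n) (c : nat)%:Z.
Proof. by rewrite [RHS](reindex_inj (@pos_inj n L r HL)). Qed.

Lemma d_even r1 r2 : exists e, dist_rows L r1 r2 = 2 * e.
Proof.
exists (\sum_(c < n) (c : nat)%:Z - \sum_(s < n) (minn (pos L r1 s) (pos L r2 s))%:Z).
rewrite /dist_rows; under eq_bigr do rewrite abs_min.
rewrite sumrB big_split /= sum_pos sum_pos -mulr_sumr; ring.
Qed.

Lemma sum_d : 3 * \sum_r1 \sum_r2 dist_rows L r1 r2 = n%:Z * (n%:Z ^+ 3 - n%:Z).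
Proof.
rewrite /dist_rows.
under eq_bigr do rewrite exchange_big.
rewrite exchange_big /= mulr_sumr -Gord.
transitivity (\sum_(s < n) (3 * \sum_(a < n) \sum_(b < n) `|(a:nat)%:Z - (b:nat)%:Z|)); last first.
  rewrite sumr_const card_ord; set X := 3 * _; rewrite -natz mulr_natl; reflexivity.
apply: eq_bigr => s _; congr (_ * _).
rewrite [RHS](reindex_inj (@pos_inj_col n L s HL)); apply: eq_bigr => r1 _.
by rewrite [RHS](reindex_inj (@pos_inj_col n L s HL)).
Qed.

End S.

Lemma half_sum n (h : 'I_n -> 'I_n -> int) : (forall i j, h i j = h j i) ->
  \sum_i \sum_(j | i != j) h i j = 2 * \sum_(i : 'I_n) \sum_(j : 'I_n | (i < j)%N) h i j.
Proof.
move=> hs.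
have E : forall i : 'I_n, \sum_(j | i != j) h i j = \sum_(j : 'I_n | (i < j)%N) h i j + \sum_(j : 'I_n | (j < i)%N) h i j.
  move=> i; rewrite (bigID (fun j : 'I_n => (i < j)%N)) /=; congr (_ + _); apply: eq_bigl => j;
  by rewrite -val_eqE neq_ltn; case: ltngtP.
rewrite (eq_bigr _ (fun i _ => E i)) big_split /= mulr2n.
have -> : \sum_(i < n) \sum_(j < n | (j < i)%N) h i j = \sum_(i < n) \sum_(j < n | (i < j)%N) h i j.
  under eq_bigr do rewrite big_mkcond.
  rewrite exchange_big /=; apply: eq_bigr => i _.
  rewrite [RHS]big_mkcond; apply: eq_bigr => j _.
  by rewrite hs.
by rewrite mulrDl mul1r.
Qed.

Lemma nn1 (n : nat) : n = 1 %[mod 3] -> exists t : int, (n * (n + 1))%:Z = 6 * t + 2.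
Proof.
move=> hm.
have [q hq] : exists q, n = (3 * q + 1)%N.
  exists (n %/ 3)%N; rewrite {1}(divn_eq n 3) hm; lia.
have [v [hv|hv]] : exists v, q = (2 * v)%N \/ q = (2 * v + 1)%N.
  exists (q %/ 2)%N; have := divn_eq q 2; have := ltn_pmod q (isT : (0 < 2)%N); lia.
  exists (3 * v%:Z * (2 * v%:Z + 1)); rewrite hq hv; lia.
exists (3 * (2 * v%:Z + 1) * (v%:Z + 1)); rewrite hq hv; lia.
Qed.

Lemma dist_same n (L : 'I_n -> 'I_n -> 'I_n) r : dist_rows L r r = 0.
Proof. by rewrite /dist_rows big1 // => s _; rewrite subrr normr0. Qed.

Lemma dist_sym n (L : 'I_n -> 'I_n -> 'I_n) r1 r2 : dist_rows L r1 r2 = dist_rows L r2 r1.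
Proof. by rewrite /dist_rows; apply: eq_bigr => s _; rewrite distrC. Qed.

Theorem theorem3 (n : nat) (L : 'I_n -> 'I_n -> 'I_n) :
  (0 < n)%N -> n = 1 %[mod 3] -> latin_square L ->
  (4 * n * (n - 1))%:R / 9%:R <= imbalance L.
Proof.
move=> n0 hm HL.
set c := (n * (n + 1))%:Z.
pose x r1 r2 := 3%:Z * dist_rows L r1 r2 - c.
have hx : forall r1 r2, 8 + x r1 r2 <= 3 * `|x r1 r2|.
  move=> r1 r2; have [e he] := @d_even n L HL r1 r2; have [t ht] := @nn1 n hm.
  apply: (@key_ineq _ (e - t - 1)); rewrite /x he /c ht; lia.
have hsum : \sum_r1 \sum_(r2 | r1 != r2) x r1 r2 = 0.
  have E : forall r1, \sum_(r2 | r1 != r2) x r1 r2 = \sum_r2 x r1 r2 + c.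
    move=> r1; rewrite [\sum_r2 _](bigD1 r1) //=.
    have -> : \sum_(i < n | i != r1) x r1 i = \sum_(i < n | r1 != i) x r1 i.
      by apply: eq_bigl => i; rewrite eq_sym.
    rewrite /x dist_same mulr0 add0r addrAC addNr add0r //.
  rewrite (eq_bigr _ (fun r1 _ => E r1)) big_split /= sumr_const card_ord.
  rewrite /x; under eq_bigr do rewrite sumrB sumr_const card_ord -mulr_sumr.
  rewrite sumrB sumr_const card_ord -mulr_sumr.
  have SD := @sum_d n L HL.
  move: SD; set D := \sum_(_ < n) _ => SD.
  clear E hx; clearbody D; clear x.
  have h1 : forall (y : int) k, y *+ k = y * k%:Z by move=> y k; rewrite -natz mulr_natr.
  rewrite /c !h1 !exprS expr0 !mulr1 in SD *. lia.
have hc1 : forall r1 : 'I_n, \sum_(r2 | r1 != r2) (1:int) = (n - 1)%:Z.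
  move=> r1; rewrite sumr_const (@eq_card _ _ (predC1 r1)); last by move=> i; rewrite !inE eq_sym.
  by rewrite cardC1 card_ord -natz subn1.
have hrow : forall r1 : 'I_n, \sum_(r2 | r1 != r2) (8 + x r1 r2) = 8 * (n - 1)%:Z + \sum_(r2 | r1 != r2) x r1 r2.
  move=> r1; rewrite big_split /= -(hc1 r1) mulr_sumr; congr (_ + _).
have hlow : \sum_r1 \sum_(r2 | r1 != r2) (8 + x r1 r2) = 8 * (n%:Z * (n - 1)%:Z).
  rewrite (eq_bigr _ (fun r1 _ => hrow r1)) big_split /= hsum addr0 sumr_const card_ord.
  rewrite -mulr_natr natz -mulrA !mul1r -mulrnAr -mulr_natl natz //.
have hup : \sum_r1 \sum_(r2 | r1 != r2) (8 + x r1 r2) <= \sum_r1 \sum_(r2 | r1 != r2) 3 * `|x r1 r2|.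
  by apply: ler_sum => r1 _; apply: ler_sum => r2 _; exact: hx.
have hsym : forall i j, `|x i j| = `|x j i| by move=> i j; rewrite /x dist_sym.
have hA : \sum_r1 \sum_(r2 | r1 != r2) 3 * `|x r1 r2| = 3 * (2 * \sum_(r1 : 'I_n) \sum_(r2 : 'I_n | (r1 < r2)%N) `|x r1 r2|).
  rewrite -(@half_sum n _ hsym) mulr_sumr; apply: eq_bigr => r1 _; by rewrite mulr_sumr.
move: hup; rewrite hlow hA; set A := \sum_(_ : 'I_n) _ => hup.
have hI : imbalance L = 1 / 3%:R * A%:~R.
  rewrite /imbalance rmorph_sum /=; congr (_ * _); apply: eq_bigr => r1 _.
  by rewrite rmorph_sum.
rewrite hI.
have H : (4 * n * (n - 1))%:Z <= 3 * A.
  clearbody A; clear hI hlow hA hrow hc1 hsum hsym hx; clear x; lia.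
have := H; rewrite -(ler_int rat) => H2.
move: H2; rewrite -pmulrn [X in _ <= X -> _]intrM (_ : (3%:~R : rat) = 3) //; set a := A%:~R; set b := (_ * _ * _)%:R; lra.
Qed.
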